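(* Let $f(x)=x^5+px^4+qx^3+rx^2+sx+t$ with real coefficients, and suppose $D=0$ and $L_1>0$ (so that $f$ has one real double root and three distinct real simple roots). Then the double root of $f$ equals $d=C_0/L_1$. Put $F_1=q+4pd+10d^2$, $F_2=r+3qd+6pd^2+10d^3$, $F_3=pq+4p^2d-24pd^2-22qd-40d^3-9r$. Then, writing the roots in increasing order: (a) if $F_1>0$, $F_2<0$, $F_3<0$: double $<$ single $<$ single $<$ single; (b) if $F_1>0$, $F_2>0$, $F_3>0$: single $<$ single $<$ single $<$ double; (c) if $F_2>0$ and ($F_1\le0$ or $F_3\le 0$): single $<$ double $<$ single $<$ single; (d) if $F_2<0$ and ($F_1\le 0$ or $F_3\ge0$): single $<$ single $<$ double $<$ single.
   Context: Let $\alpha_1,\dots,\alpha_5\in\mathbb{C}$ be the roots of $f$ listed with multiplicity. $D=\prod_{1\le i<j\le 5}(\alpha_i-\alpha_j)^2$ is the discriminant of $f$. $L_1=-264ps^2r-12p^3tq^2+36r^3pq-124srpq^2+28srp^3q+260sptq-132p^2qrt+240pr^2t+234sqr^2+32p^4tr+48ptq^3-56sp^3t-80q^2rt+194qs^2p^2-600str-6q^3sp^2+2p^2q^2r^2-12sr^2p^2-54r^4+320s^3-8q^3r^2-8r^3p^3+250qt^2-176q^2s^2+24q^4s-36p^4s^2-100p^2t^2$. $C_0=48sp^4t+4sp^3r^2+80p^3t^2-32p^3rqt-3p^3s^2q+7s^2p^2r-p^2srq^2-4p^2r^2t+9p^2tq^3-266sqp^2t+16ps^3+146ptrq^2-18spr^2q+290sptr-275pqt^2+12ps^2q^2+4sq^3r-195r^2qt+260sq^2t+27sr^3+375t^2r-36q^4t-48rs^2q-400ts^2$.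 (Note $f(y+d)=y^2\,(y^3+(p+5d)y^2+F_1y+F_2)$, and $F_3=(p+5d)F_1-9F_2$.) *)

(* Defs.v *)
From HB Require Import structures.
From mathcomp Require Import all_boot all_order all_algebra all_field.
Set Implicit Arguments. Unset Strict Implicit. Unset Printing Implicit Defensive.
Import Order.TTheory GRing.Theory Num.Theory.
Local Open Scope ring_scope.

Section Quintic.
Variable C : numClosedFieldType.

Definition quintic (p q r s t : C) : {poly C} :=
  'X^5 + p *: 'X^4 + q *: 'X^3 + r *: 'X^2 + s *: 'X + t%:P.

Definition discr5 (alpha : 'I_5 -> C) : C :=
  \prod_(i < 5) \prod_(j < 5 | (i < j)%N) (alpha i - alpha j) ^+ 2.

Definition L1 (p q r s t : C) : C :=
  - 264%:R * p * s^+2 * r - 12%:R * p^+3 * t * q^+2 + 36%:R * r^+3 * p * q - 124%:R * s * r * p * q^+2 + 28%:R * s * r * p^+3 * q + 260%:R * s * p * t * q - 132%:R * p^+2 * q * r * t + 240%:R * p * r^+2 * t + 234%:R * s * q * r^+2 + 32%:R * p^+4 * t * r + 48%:R * p * t * q^+3 - 56%:R * s * p^+3 * t - 80%:R * q^+2 * r * t + 194%:R * q * s^+2 * p^+2 - 600%:R * s * t * r - 6%:R * q^+3 * s * p^+2 + 2%:R * p^+2 * q^+2 * r^+2 - 12%:R * s * r^+2 * p^+2 - 54%:R * r^+4 + 320%:R * s^+3 - 8%:R * q^+3 * r^+2 - 8%:R * r^+3 * p^+3 + 250%:R * q * t^+2 - 176%:R * q^+2 * s^+2 + 24%:R * q^+4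 * s - 36%:R * p^+4 * s^+2 - 100%:R * p^+2 * t^+2.

Definition C0 (p q r s t : C) : C :=
  48%:R * s * p^+4 * t + 4%:R * s * p^+3 * r^+2 + 80%:R * p^+3 * t^+2 - 32%:R * p^+3 * r * q * t - 3%:R * p^+3 * s^+2 * q + 7%:R * s^+2 * p^+2 * r - p^+2 * s * r * q^+2 - 4%:R * p^+2 * r^+2 * t + 9%:R * p^+2 * t * q^+3 - 266%:R * s * q * p^+2 * t + 16%:R * p * s^+3 + 146%:R * p * t * r * q^+2 - 18%:R * s * p * r^+2 * q + 290%:R * s * p * t * r - 275%:R * p * q * t^+2 + 12%:R * p * s^+2 * q^+2 + 4%:R * s * q^+3 * r - 195%:R * r^+2 * q * t + 260%:R * s * q^+2 * t + 27%:R * s * r^+3 + 375%:R * t^+2 * r - 36%:R * q^+4 * t - 48%:R * r * s^+2 * q - 400%:R * t * s^+2.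

Definition F1 (p q r s t d : C) : C := q + 4%:R * p * d + 10%:R * d ^+ 2.
Definition F2 (p q r s t d : C) : C :=
  r + 3%:R * q * d + 6%:R * p * d ^+ 2 + 10%:R * d ^+ 3.
Definition F3 (p q r s t d : C) : C :=
  p * q + 4%:R * p ^+ 2 * d - 24%:R * p * d ^+ 2 - 22%:R * q * d
  - 40%:R * d ^+ 3 - 9%:R * r.

End Quintic.

(* Main.v *)
Require Import Defs.
From HB Require Import structures.
From mathcomp Require Import all_boot all_order all_algebra all_field.
From mathcomp Require Import ring.
Import Order.TTheory GRing.Theory Num.Theory.
Local Open Scope ring_scope.

Ltac realt := repeat first [apply: rpred_nat | assumption | apply: rpredD | rewrite rpredN | rewrite realN | apply: rpredM | apply: rpredX].

Set Implicit Arguments.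
Section Helpers.
Context {C : numClosedFieldType}.
Lemma bF (b : bool) : b = false -> b -> False. Proof. by move->. Qed.
Arguments bF : clear implicits.

Definition cp (d x y z : C) := -(d+d+x+y+z).
Definition cq (d x y z : C) := d*d + (d+d)*(x+y+z) + (x*y+x*z+y*z).
Definition cr (d x y z : C) := -(x*y*z + (d+d)*(x*y+x*z+y*z) + d*d*(x+y+z)).
Definition cs (d x y z : C) := (d+d)*x*y*z + d*d*(x*y+x*z+y*z).
Definition ct (d x y z : C) := -(d*d*x*y*z).
Lemma fact_id (d x y z : C) :
  ('X - d%:P)^+2 * ('X - x%:P) * ('X - y%:P) * ('X - z%:P) =
  quintic (cp d x y z) (cq d x y z) (cr d x y z) (cs d x y z) (ct d x y z).
Proof.
rewrite /quintic /cp /cq /cr /cs /ct -!mul_polyC.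
rewrite !(polyCD, polyCN, polyCM). ring.
Qed.
Lemma quintic_inj (p q r s t p' q' r' s' t' : C) :
  quintic p q r s t = quintic p' q' r' s' t' ->
  [/\ p = p', q = q', r = r', s = s' & t = t'].
Proof.
move=> E.
have co k : (quintic p q r s t)`_k = (quintic p' q' r' s' t')`_k by rewrite E.
have := co 4%N; have := co 3%N; have := co 2%N; have := co 1%N; have := co 0%N.
rewrite /quintic !coefD !coefZ !coefXn !coefX !coefC /=.
rewrite !(mulr0, mulr1, addr0, add0r).
by move=> -> -> -> -> ->.
Qed.

Lemma discr_fact (alpha : 'I_5 -> C) : discr5 alpha = 0 ->
  exists d x y z, \prod_(i < 5) ('X - (alpha i)%:P) =
    ('X - d%:P)^+2 * ('X - x%:P) * ('X - y%:P) * ('X - z%:P).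
Proof.
rewrite /discr5 => /eqP/prodf_eq0[i _].
move/prodf_eq0=> [j ij]; rewrite expf_eq0 /= subr_eq0 => /eqP Eij.
pose a k := alpha (inord k).
have Ea (k : 'I_5) : alpha k = a k by rewrite /a inord_val.
rewrite (eq_bigr (fun k : 'I_5 => 'X - (a k)%:P)); last by move=> k _; rewrite Ea.
rewrite !big_ord_recl big_ord0 /=.
move: Eij; rewrite !Ea.
case: i ij => [[|[|[|[|[|i]]]]] Hi] //=; case: j => [[|[|[|[|[|j]]]]] Hj] //= _ E.
all: rewrite ?addn0 ?add1n -E.
- by exists (a 0%N), (a 2%N), (a 3%N), (a 4%N); ring.
- by exists (a 0%N), (a 1%N), (a 3%N), (a 4%N); ring.
- by exists (a 0%N), (a 1%N), (a 2%N), (a 4%N); ring.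
- by exists (a 0%N), (a 1%N), (a 2%N), (a 3%N); ring.
- by exists (a 1%N), (a 0%N), (a 3%N), (a 4%N); ring.
- by exists (a 1%N), (a 0%N), (a 2%N), (a 4%N); ring.
- by exists (a 1%N), (a 0%N), (a 2%N), (a 3%N); ring.
- by exists (a 2%N), (a 0%N), (a 1%N), (a 4%N); ring.
- by exists (a 2%N), (a 0%N), (a 1%N), (a 3%N); ring.
- by exists (a 3%N), (a 0%N), (a 1%N), (a 2%N); ring.
Qed.


Lemma signs (u v w : C) : u \is Num.real -> v \is Num.real -> w \is Num.real ->
  u < v -> v < w -> u != 0 -> v != 0 -> w != 0 ->
  let e2 := u*v + u*w + v*w in let e3 := u*v*w in
  let D := (u+v+w)*e2 - 9%:R*e3 in
  ((0 < e2 /\ 0 < e3 /\ 0 < D) -> 0 < u) /\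
  ((0 < e2 /\ e3 < 0 /\ D < 0) -> w < 0) /\
  ((e3 < 0 /\ (e2 <= 0 \/ 0 <= D)) -> u < 0 /\ 0 < v) /\
  ((0 < e3 /\ (e2 <= 0 \/ D <= 0)) -> v < 0 /\ 0 < w).
Proof.
move=> Ru Rv Rw uv vw u0 v0 w0 e2 e3 D.
have dvu : 0 < v - u by rewrite subr_gt0.
have dwv : 0 < w - v by rewrite subr_gt0.
have dwu : 0 < w - u by rewrite subr_gt0 (lt_trans uv vw).
have HD : D = u*(w-v)^+2 + v*(w-u)^+2 + w*(v-u)^+2 by rewrite /D /e2 /e3; ring.
case: (real_ltgt0P Rv) => [vp|vn|]; [| |by move/eqP: v0]; last first.
- have un : u < 0 by exact: lt_trans uv vn.
  have nu : 0 < - u by rewrite oppr_gt0.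
  have nv : 0 < - v by rewrite oppr_gt0.
  case: (real_ltgt0P Rw) => [wp|wn|]; [| |by move/eqP: w0]; last first.
  +
    have nw : 0 < - w by rewrite oppr_gt0.
    have e3n : e3 < 0.
      rewrite -oppr_gt0 (_ : - e3 = (-u)*(-v)*(-w)); last by rewrite /e3; ring.
      by rewrite !mulr_gt0.
    have e2p : 0 < e2.
      rewrite (_ : e2 = (-u)*(-v)+(-u)*(-w)+(-v)*(-w)); last by rewrite /e2; ring.
      by rewrite !addr_gt0 // !mulr_gt0.
    have Dn : D < 0.
      rewrite -oppr_gt0 (_ : - D = (-u)*(w-v)^+2 + (-v)*(w-u)^+2 + (-w)*(v-u)^+2); last by rewrite HD; ring.
      by rewrite !addr_gt0 // mulr_gt0 // exprn_gt0.
    split; first by case=> _ [] /(bF _ (lt_gtF e3n)).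
    split; first by [].
    split; first by case=> _ [/(bF _ (lt_geF e2p))|/(bF _ (lt_geF Dn))].
    by case=> /(bF _ (lt_gtF e3n)).
  +
    have e3p : 0 < e3.
      rewrite (_ : e3 = (-u)*(-v)*w); last by rewrite /e3; ring.
      by rewrite !mulr_gt0.
    have key : 0 < e2 -> D < 0.
      move=> e2p.
      have s : 0 < (u+v+w) * (u+v) by rewrite (_ : (u+v+w)*(u+v) = e2 + ((-u)^+2 + (-u)*(-v) + (-v)^+2)); [rewrite addr_gt0 // !addr_gt0 // ?mulr_gt0 // exprn_gt0 | rewrite /e2; ring].
      have s2 : 0 < - (u+v) by rewrite opprD addr_gt0.
      have e1n : 0 < - (u+v+w).
        by rewrite -(pmulr_lgt0 _ s2) (_ : - (u+v+w) * - (u+v) = (u+v+w)*(u+v)) //; ring.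
      rewrite -oppr_gt0 (_ : - D = (-(u+v+w))*e2 + 9%:R*e3); last by rewrite /D; ring.
      by rewrite addr_gt0 // mulr_gt0 // ltr0n.
    split; first by case=> /key /lt_gtF -> [].
    split; first by case=> _ [] /(bF _ (lt_gtF e3p)).
    split; first by case=> /(bF _ (lt_gtF e3p)).
    by [].
- have wp : 0 < w by exact: lt_trans vp vw.
  case: (real_ltgt0P Ru) => [up|un|]; [| |by move/eqP: u0]; last first.
  +
    have nu : 0 < - u by rewrite oppr_gt0.
    have e3n : e3 < 0.
      rewrite -oppr_gt0 (_ : - e3 = (-u)*v*w); last by rewrite /e3; ring.
      by rewrite !mulr_gt0.
    have key : 0 < e2 -> 0 < D.
      move=> e2p.
      have s : 0 < (u+v+w) * (v+w) by rewrite (_ : (u+v+w)*(v+w) = e2 + (v^+2 + v*w + w^+2)); [rewrite addr_gt0 // !addr_gt0 // ?mulr_gt0 // exprn_gt0 | rewrite /e2; ring].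
      have s2 : 0 < v + w by rewrite addr_gt0.
      have e1p : 0 < u+v+w by rewrite -(pmulr_lgt0 _ s2).
      rewrite (_ : D = (u+v+w)*e2 + 9%:R*(-e3)); last by rewrite /D; ring.
      by rewrite addr_gt0 // mulr_gt0 // ?ltr0n // oppr_gt0.
    split; first by case=> _ [] /(bF _ (lt_gtF e3n)).
    split; first by case=> /key /lt_gtF -> [].
    split; first by [].
    by case=> /(bF _ (lt_gtF e3n)).
  +
    have e3p : 0 < e3 by rewrite !mulr_gt0.
    have e2p : 0 < e2 by rewrite !addr_gt0 // !mulr_gt0.
    have Dp : 0 < D by rewrite HD !addr_gt0 // mulr_gt0 // exprn_gt0.
    split; first by [].
    split; first by case=> _ [] /(bF _ (lt_gtF e3p)).
    split; first by case=> /(bF _ (lt_gtF e3p)).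
    by case=> _ [/(bF _ (lt_geF e2p))|/(bF _ (lt_geF Dp))].
Qed.

Definition Qf (x y z d : C) := ((x-y)*(x-z)*(y-z))^+2 * ((d-x)*(d-y)*(d-z))^+2.

Lemma aux_neg (x z d : C) : z \is Num.real -> d \is Num.real -> Qf x x^* z d <= 0.
Proof.
move=> Rz Rd.
have E : Qf x x^* z d = - (`|x - x^*|^+2 * (`|x-z|^+2)^+2 * (`|d-x|^+2)^+2 * `|d-z|^+2).
  rewrite !normCK !rmorphB /= conjCK (conj_Creal Rz) (conj_Creal Rd) /Qf; ring.
by rewrite E oppr_le0 !mulr_ge0 // ?exprn_ge0 // ?normr_ge0.
Qed.

Lemma real_root (x y z d : C) : x+y+z \is Num.real -> x*y+x*z+y*z \is Num.real ->
  x*y*z \is Num.real -> d \is Num.real -> 0 < Qf x y z d -> x \is Num.real.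
Proof.
move=> R1 R2 R3 Rd HQ.
move: R1 R2 R3.
have [e1 E1] : exists e1, e1 = x+y+z by eexists.
have [e2 E2] : exists e2, e2 = x*y+x*z+y*z by eexists.
have [e3 E3] : exists e3, e3 = x*y*z by eexists.
rewrite -E1 -E2 -E3 => R1 R2 R3.
have h : (x^* - x)*(x^* - y)*(x^*-z) = (x^+3 - e1*x^+2 + e2*x - e3)^*.
  rewrite !(rmorphB, rmorphD, rmorphN, rmorphM, rmorphXn) /= (conj_Creal R1) (conj_Creal R2) (conj_Creal R3).
  rewrite E1 E2 E3; ring.
have : (x^* - x)*(x^* - y)*(x^*-z) = 0.
  by rewrite h (_ : x^+3 - e1*x^+2 + e2*x - e3 = 0) ?rmorph0 //; rewrite E1 E2 E3; ring.
have Rxx : x + x^* \is Num.real by rewrite CrealE rmorphD /= conjCK addrC.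
move/eqP; rewrite !mulf_eq0 !subr_eq0 => /orP[/orP[/eqP/CrealP //|/eqP Ey]|/eqP Ez].
- have Rz : z \is Num.real.
    by rewrite (_ : z = e1 - (x + x^*)) ?rpredB // E1 Ey; ring.
  by move: (@aux_neg x z d Rz Rd); rewrite Ey (lt_geF HQ).
- have Ry : y \is Num.real.
    by rewrite (_ : y = e1 - (x + x^*)) ?rpredB // E1 Ez; ring.
  move: HQ; rewrite (_ : Qf x y z d = Qf x z y d); last by rewrite /Qf; ring.
  by move=> HQ'; move: (@aux_neg x y d Ry Rd); rewrite Ez (lt_geF HQ').
Qed.

Lemma sort3 (x y z : C) : x \is Num.real -> y \is Num.real -> z \is Num.real ->
  x != y -> x != z -> y != z ->
  exists a b c, [/\ a < b, b < c,
    ('X - a%:P) * ('X - b%:P) * ('X - c%:P) = ('X - x%:P) * ('X - y%:P) * ('X - z%:P) &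
    forall P : C -> Prop, P x -> P y -> P z -> [/\ P a, P b & P c]].
Proof.
move=> Rx Ry Rz xy xz yz.
case: (real_ltgtP Rx Ry) => [hxy|hxy|e]; last by rewrite e eqxx in xy.
all: case: (real_ltgtP Rx Rz) => [hxz|hxz|e]; last by rewrite e eqxx in xz.
all: case: (real_ltgtP Ry Rz) => [hyz|hyz|e]; last by rewrite e eqxx in yz.
all: first [ (exists x, y, z; split; [done|done|ring|by move=> P ? ? ?; split]) | (exists x, z, y; split; [done|done|ring|by move=> P ? ? ?; split]) | (exists y, x, z; split; [done|done|ring|by move=> P ? ? ?; split]) | (exists y, z, x; split; [done|done|ring|by move=> P ? ? ?; split]) | (exists z, x, y; split; [done|done|ring|by move=> P ? ? ?; split]) | (exists z, y, x; split; [done|done|ring|by move=> P ? ? ?; split]) | (exfalso; apply: (bF _ (lt_gtF hxy)); exact: lt_trans hxz hyz) | (exfalso; apply: (bF _ (lt_gtF hxy)); exact: lt_trans hyz hxz) | (exfalso; apply: (bF _ (lt_gtF hxz)); exact: lt_trans hxy hyz) | (exfalso; apply: (bF _ (lt_gtF hxz)); exact: lt_trans hyz hxy) | (exfalso; apply: (bF _ (lt_gtF hyz)); exact: lt_trans hxy hxz) | (exfalso; apply: (bF _ (lt_gtF hyz)); exact: lt_trans hxz hxy) ].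
Qed.
Lemma L1_id (d x y z : C) : L1 (cp d x y z) (cq d x y z) (cr d x y z) (cs d x y z) (ct d x y z)
  = 2%:R * (((x-y)*(x-z)*(y-z))^+2 * ((d-x)*(d-y)*(d-z))^+2).
Proof. rewrite /L1 /cp /cq /cr /cs /ct. ring. Qed.
Lemma C0_id (d x y z : C) : C0 (cp d x y z) (cq d x y z) (cr d x y z) (cs d x y z) (ct d x y z)
  = d * L1 (cp d x y z) (cq d x y z) (cr d x y z) (cs d x y z) (ct d x y z).
Proof. rewrite /C0 /L1 /cp /cq /cr /cs /ct. ring. Qed.
End Helpers.
Unset Implicit Arguments.

Theorem mainTheorem8 (C : numClosedFieldType) (p q r s t : C)
  (alpha : 'I_5 -> C) :
  p \is Num.real -> q \is Num.real -> r \is Num.real ->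
  s \is Num.real -> t \is Num.real ->
  quintic p q r s t = \prod_(i < 5) ('X - (alpha i)%:P) ->
  discr5 alpha = 0 ->
  0 < L1 p q r s t ->
  let d := C0 p q r s t / L1 p q r s t in
  let f1 := F1 p q r s t d in
  let f2 := F2 p q r s t d in
  let f3 := F3 p q r s t d in
  exists a b c : C,
    [/\ a \is Num.real, b \is Num.real, c \is Num.real & d \is Num.real] /\
    [/\ a < b, b < c, d != a, d != b & d != c] /\
    quintic p q r s t = ('X - d%:P) ^+ 2 * ('X - a%:P) * ('X - b%:P) * ('X - c%:P) /\
    ((0 < f1 /\ f2 < 0 /\ f3 < 0) -> d < a) /\
    ((0 < f1 /\ 0 < f2 /\ 0 < f3) -> c < d) /\
    ((0 < f2 /\ (f1 <= 0 \/ f3 <= 0)) -> a < d /\ d < b) /\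
    ((f2 < 0 /\ (f1 <= 0 \/ 0 <= f3)) -> b < d /\ d < c).
Proof.
move=> Hp Hq Hr Hs Ht Hf HD HL d f1 f2 f3.
rewrite /f1 /f2 /f3.
have [d0 [x [y [z Hfac]]]] := @discr_fact _ alpha HD.
have Hf0 := Hf; rewrite Hfac fact_id in Hf0.
have [ep eq er es et] := @quintic_inj _ _ _ _ _ _ _ _ _ _ _ Hf0.
have HLid : L1 p q r s t = 2%:R * Qf x y z d0.
  by rewrite ep eq er es et L1_id.
have HC : C0 p q r s t = d0 * L1 p q r s t.
  by rewrite {1}ep {1}eq {1}er {1}es {1}et C0_id -ep -eq -er -es -et.
have RC0 : C0 p q r s t \is Num.real.
  rewrite /C0; by realt.
have RL1 : L1 p q r s t \is Num.real.
  rewrite /L1; by realt.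
have Rd : d \is Num.real.
  by rewrite /d rpredM // rpredV.
have dd0 : d = d0 by rewrite /d HC mulfK // lt0r_neq0.
clearbody d; subst d.
have R1 : x + y + z \is Num.real.
  rewrite (_ : x + y + z = - p - (d0 + d0)); first by realt.
  by rewrite ep /cp; ring.
have R2 : x*y + x*z + y*z \is Num.real.
  rewrite (_ : x*y + x*z + y*z = q - d0*d0 - (d0+d0)*(x+y+z)); first by realt.
  by rewrite eq /cq; ring.
have R3 : x*y*z \is Num.real.
  rewrite (_ : x*y*z = - r - (d0+d0)*(x*y+x*z+y*z) - d0*d0*(x+y+z)); first by realt.
  by rewrite er /cr; ring.
have HQ : 0 < Qf x y z d0 by rewrite -(pmulr_rgt0 _ (ltr0n C 2)) -HLid.
have Rx : x \is Num.real by exact: (@real_root _ x y z d0 R1 R2 R3 Rd HQ).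
have Ry : y \is Num.real.
  apply: (@real_root _ y x z d0 _ _ _ Rd).
  - by have -> : y + x + z = x + y + z by ring.
  - by have -> : y*x+y*z+x*z = x*y+x*z+y*z by ring.
  - by have -> : y*x*z = x*y*z by ring.
  - by have -> : Qf y x z d0 = Qf x y z d0 by rewrite /Qf; ring.
have Rz : z \is Num.real.
  apply: (@real_root _ z x y d0 _ _ _ Rd).
  - by have -> : z + x + y = x + y + z by ring.
  - by have -> : z*x+z*y+x*y = x*y+x*z+y*z by ring.
  - by have -> : z*x*y = x*y*z by ring.
  - by have -> : Qf z x y d0 = Qf x y z d0 by rewrite /Qf; ring.
have HQ0 : Qf x y z d0 != 0 by rewrite lt0r_neq0.
have xy : x != y by apply: contraNN HQ0 => /eqP E; apply/eqP; rewrite /Qf E; ring.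
have xz : x != z by apply: contraNN HQ0 => /eqP E; apply/eqP; rewrite /Qf E; ring.
have yz : y != z by apply: contraNN HQ0 => /eqP E; apply/eqP; rewrite /Qf E; ring.
have dx : d0 != x by apply: contraNN HQ0 => /eqP E; apply/eqP; rewrite /Qf E; ring.
have dy : d0 != y by apply: contraNN HQ0 => /eqP E; apply/eqP; rewrite /Qf E; ring.
have dz : d0 != z by apply: contraNN HQ0 => /eqP E; apply/eqP; rewrite /Qf E; ring.
have [a [b [c [ab bc Hs3 HP]]]] := @sort3 _ x y z Rx Ry Rz xy xz yz.
have [Ra Rb Rc] := HP (fun u => u \is Num.real) Rx Ry Rz.
have [da db dc] := HP (fun u => d0 != u) dx dy dz.
have Hf2 : quintic p q r s t = ('X - d0%:P) ^+ 2 * ('X - a%:P) * ('X - b%:P) * ('X - c%:P).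
  rewrite Hf Hfac.
  transitivity (('X - d0%:P)^+2 * (('X - x%:P) * ('X - y%:P) * ('X - z%:P))); first by rewrite !mulrA.
  by rewrite -Hs3 !mulrA.
have Hf3 := Hf2; rewrite fact_id in Hf3.
have [ep' eq' er' _ _] := @quintic_inj _ _ _ _ _ _ _ _ _ _ _ Hf3.
have HF1 : F1 p q r s t d0 = (a-d0)*(b-d0) + (a-d0)*(c-d0) + (b-d0)*(c-d0).
  by rewrite /F1 ep' eq' /cp /cq; ring.
have HF2 : F2 p q r s t d0 = - ((a-d0)*(b-d0)*(c-d0)).
  by rewrite /F2 ep' eq' er' /cp /cq /cr; ring.
have HF3 : F3 p q r s t d0 = - (((a-d0)+(b-d0)+(c-d0))*((a-d0)*(b-d0) + (a-d0)*(c-d0) + (b-d0)*(c-d0)) - 9%:R*((a-d0)*(b-d0)*(c-d0))).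
  by rewrite /F3 ep' eq' er' /cp /cq /cr; ring.
have := @signs _ (a-d0) (b-d0) (c-d0) (rpredB Ra Rd) (rpredB Rb Rd) (rpredB Rc Rd).
rewrite !ltrD2r => /(_ ab bc).
rewrite !subr_eq0 !(eq_sym _ d0) => /(_ da db dc) /=.
move=> [Ha [Hb [Hc Hd]]].
exists a, b, c; split; first by split.
split; first by split.
split; first by [].
rewrite HF1 HF2 HF3 !(oppr_lt0, oppr_gt0, oppr_le0, oppr_ge0).
rewrite -[d0 < a]subr_gt0 -[c < d0]subr_lt0 -[a < d0]subr_lt0 -[d0 < b]subr_gt0 -[b < d0]subr_lt0 -[d0 < c]subr_gt0.
by split.
Qed.
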